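(* Let $\mathbf{A}$ be a countable UL-chain and let $\mathscr{K}_0$ be the class of all finite $\mathbf{A}$-structures $\langle\mathbf{A},\mathbf{M}\rangle$ in the language with a single binary relation symbol $<$ (and no other symbols) such that for all $a,b,c\in M$: (0.1) $\|a<a\|^{\mathbf{A}}_{\mathbf{M}}\ge \bar 1$, and (0.2) $\|(a<b\wedge b<c)\to a<c\|^{\mathbf{A}}_{\mathbf{M}}\ge\bar 1$. Then $\mathscr{K}_0^{\cong}$ is the age of some $\mathbf{A}$-structure.
   Context: A UL-algebra is $\mathbf{A}=\langle A,\wedge,\vee,\&,\to,\bar 0,\bar 1,\bot,\top\rangle$ where $\langle A,\wedge,\vee,\bot,\top\rangle$ is a bounded lattice, $\langle A,\&,\bar 1\rangle$ is a commutative monoid, $a\& b\le c$ iff $b\le a\to c$, and $((a\to b)\wedge\bar 1)\vee((b\to a)\wedge \bar 1)=\bar 1$; a UL-chain is one with linear order. An $\mathbf{A}$-structure for the language $\{<\}$ is a set $M$ with a function $<_{\mathbf{M}}:M^2\to A$; $\|a<b\|^{\mathbf{A}}_{\mathbf{M}}=<_{\mathbf{M}}(a,b)$ and compound quantifier-free formulas are evaluated by the operations of $\mathbf{A}$. A substructure is a subset with the restricted relation; an embedding is an injective map preserving the value of $<$ (hence of all quantifier-free formulas), with the identity on $\mathbf{A}$; an isomorphism is a surjective embedding. $\mathscr{K}^{\cong}$ denotes a class containing exactly one representative of each isomorphism type of members of $\mathscr{K}$. The age of an $\mathbf{A}$-structure is the class, up to isomorphism, of its finitely generated (here: finite) substructures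 and their isomorphic copies. *)

(* Defs.v *)
From Stdlib Require Import List.

Record ULAlgebra := {
  car :> Type;
  meet : car -> car -> car;
  join : car -> car -> car;
  fus  : car -> car -> car;
  imp  : car -> car -> car;
  zero_bar : car;
  one_bar  : car;
  bot : car;
  top : car;
  meetA : forall a b c, meet a (meet b c) = meet (meet a b) c;
  joinA : forall a b c, join a (join b c) = join (join a b) c;
  meetC : forall a b, meet a b = meet b a;
  joinC : forall a b, join a b = join b a;
  meet_absorb : forall a b, meet a (join a b) = a;
  join_absorb : forall a b, join a (meet a b) = a;
  join_bot : forall a, join bot a = a;
  meet_top : forall a, meet top a = a;
  fusA : forall a b c, fus a (fus b c) = fus (fus a b) c;
  fusC : forall a b, fus a b = fus b a;
  fus1 : forall a, fus one_bar a = a;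
  (* residuation: a & b <= c iff b <= a -> c  (x <= y := x /\ y = x) *)
  residuation : forall a b c, meet (fus a b) c = fus a b <-> meet b (imp a c) = b;
  prelinearity : forall a b,
    join (meet (imp a b) one_bar) (meet (imp b a) one_bar) = one_bar
}.

Definition ul_le (A : ULAlgebra) (x y : A) : Prop := meet A x y = x.

Definition is_chain (A : ULAlgebra) : Prop :=
  forall x y : A, ul_le A x y \/ ul_le A y x.

Definition countable_type (T : Type) : Prop :=
  exists f : T -> nat, forall x y, f x = f y -> x = y.

Definition finite_type (T : Type) : Prop :=
  exists l : list T, forall x, In x l.

Record AStructure (A : ULAlgebra) := {
  dom :> Type;
  lt_val : dom -> dom -> A
}.
Arguments lt_val {A} a _ _.

Definition in_K0 (A : ULAlgebra) (M : AStructure A) : Prop :=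
  finite_type M /\
  (forall a : M, ul_le A (one_bar A) (lt_val M a a)) /\
  (forall a b c : M,
     ul_le A (one_bar A)
       (imp A (meet A (lt_val M a b) (lt_val M b c)) (lt_val M a c))).

Definition substructure (A : ULAlgebra) (N : AStructure A) (S : N -> Prop)
  : AStructure A :=
  {| dom := { x : N | S x };
     lt_val := fun x y => lt_val N (proj1_sig x) (proj1_sig y) |}.

Definition isomorphic (A : ULAlgebra) (M M' : AStructure A) : Prop :=
  exists f : M -> M',
    (forall x y, f x = f y -> x = y) /\
    (forall y, exists x, f x = y) /\
    (forall x y, lt_val M' (f x) (f y) = lt_val M x y).

Definition in_age (A : ULAlgebra) (N : AStructure A) (M : AStructure A) : Prop :=
  exists S : N -> Prop,
    (exists l : list N, forall x, S x -> In x l) /\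
    isomorphic A M (substructure A N S).

(* Main.v *)
Require Import Defs.
From Stdlib Require Import List Lia ClassicalEpsilon ProofIrrelevance.

Section Aux.
Variable A : ULAlgebra.

Lemma meet_bot_l (c : A) : meet A (bot A) c = bot A.
Proof.
  rewrite <- (join_bot A c) at 1. apply meet_absorb.
Qed.

Lemma one_le_imp_bot (c : A) : ul_le A (one_bar A) (imp A (bot A) c).
Proof.
  unfold ul_le. apply (proj1 (residuation A (bot A) (one_bar A) c)).
  rewrite fusC, fus1. apply meet_bot_l.
Qed.

Definition dec (P : Prop) : {P} + {~ P} := excluded_middle_informative P.

Definition good (p : nat * (nat -> nat -> A)) : Prop :=
  (forall i, i < fst p -> ul_le A (one_bar A) (snd p i i)) /\
  (forall i j k, i < fst p -> j < fst p -> k < fst p ->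
     ul_le A (one_bar A) (imp A (meet A (snd p i j) (snd p j k)) (snd p i k))).

Definition Idx := { p : nat * (nat -> nat -> A) | good p }.
Definition Ndom := { i : Idx & { k : nat | k < fst (proj1_sig i) } }.

Definition Nlt (x y : Ndom) : A :=
  if dec (projT1 x = projT1 y) then
    snd (proj1_sig (projT1 x)) (proj1_sig (projT2 x)) (proj1_sig (projT2 y))
  else bot A.

Definition NN : AStructure A := {| dom := Ndom; lt_val := Nlt |}.

Lemma NN_refl (x : Ndom) : ul_le A (one_bar A) (Nlt x x).
Proof.
  unfold Nlt. destruct (dec _) as [_|n]; [|congruence].
  destruct x as [[p [g1 g2]] [k hk]]. simpl. apply g1. exact hk.
Qed.

Lemma NN_trans (a b c : Ndom) :
  ul_le A (one_bar A) (imp A (meet A (Nlt a b) (Nlt b c)) (Nlt a c)).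
Proof.
  unfold Nlt.
  destruct (dec (projT1 a = projT1 b)) as [e1|n1].
  - destruct (dec (projT1 b = projT1 c)) as [e2|n2].
    + destruct (dec (projT1 a = projT1 c)) as [e3|n3]; [|congruence].
      destruct a as [ia [ka ha]], b as [ib [kb hb]], c as [ic [kc hc]].
      simpl in *. subst ib ic. destruct ia as [p [g1 g2]]. simpl in *.
      apply g2; assumption.
    + rewrite meetC, meet_bot_l. apply one_le_imp_bot.
  - rewrite meet_bot_l. apply one_le_imp_bot.
Qed.

Fixpoint collect {T} (P : T -> Prop) (l : list T) : list {x | P x} :=
  match l with
  | nil => nil
  | a :: l' => match dec (P a) with
               | left H => exist _ a H :: collect P l'
               | right _ => collect P l'
               end
  end.

Lemma collect_in {T} (P : T -> Prop) l x (H : P x) :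
  In x l -> In (exist _ x H) (collect P l).
Proof.
  induction l as [|a l IH]; simpl; [tauto|].
  intros [E|Hi]; [subst a|].
  - destruct (dec (P x)) as [H'|n]; [|contradiction].
    left. f_equal. apply proof_irrelevance.
  - destruct (dec (P a)); [right|]; auto.
Qed.

End Aux.

Theorem proposition1 :
  forall A : ULAlgebra, is_chain A -> countable_type A ->
  exists N : AStructure A,
    forall M : AStructure A, in_K0 A M <-> in_age A N M.
Proof.
  intros A _ _. exists (NN A). intros M. split.
  - intros [[l Hl] [Hr Ht]].
    set (l' := nodup (fun x y : M => dec (x = y)) l).
    assert (Hnd : NoDup l') by apply NoDup_nodup.
    assert (Hin : forall x, In x l') by (intro x; apply nodup_In; apply Hl).
    set (n := length l').
    set (f := fun i j => match nth_error l' i, nth_error l' j with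
                         | Some a, Some b => lt_val M a b
                         | _, _ => bot A end).
    assert (Hnth : forall i, i < n -> exists a, nth_error l' i = Some a).
    { intros i hi. destruct (nth_error l' i) eqn:E; [eauto|].
      apply nth_error_None in E. unfold n in hi. lia. }
    assert (Hg : good A (n, f)).
    { split; simpl.
      - intros i hi. destruct (Hnth i hi) as [a Ea]. unfold f. rewrite Ea. apply Hr.
      - intros i j k hi hj hk.
        destruct (Hnth i hi) as [a Ea]. destruct (Hnth j hj) as [b Eb].
        destruct (Hnth k hk) as [c Ec]. unfold f. rewrite Ea, Eb, Ec. apply Ht. }
    set (i0 := exist (good A) (n, f) Hg : Idx A).
    assert (Hidx : forall a : M, {k | nth_error l' k = Some a}).
    { intro a. apply constructive_indefinite_description.
      apply In_nth_error. apply Hin. }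
    assert (Hlt : forall a : M, proj1_sig (Hidx a) < fst (proj1_sig i0)).
    { intro a. destruct (Hidx a) as [k Ek]. simpl.
      apply nth_error_Some. congruence. }
    set (phi := fun a : M => existT (fun i : Idx A => {k | k < fst (proj1_sig i)})
                   i0 (exist _ (proj1_sig (Hidx a)) (Hlt a)) : Ndom A).
    set (S := fun x : Ndom A => projT1 x = i0).
    exists S. split.
    + exists (map phi l'). intros x Sx.
      destruct x as [i [k hk]]. unfold S in Sx. simpl in Sx. subst i.
      destruct (Hnth k hk) as [a Ea].
      replace (existT _ i0 (exist _ k hk)) with (phi a).
      * apply in_map. apply Hin.
      * unfold phi. generalize (Hlt a). destruct (Hidx a) as [k' Ek']. simpl. intro hl.
        assert (k' = k).
        { eapply NoDup_nth_error; [exact Hnd| |congruence].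
          apply nth_error_Some. congruence. }
        subst k'. f_equal. f_equal. apply proof_irrelevance.
    + exists (fun a => exist S (phi a) eq_refl). split; [|split].
      * intros a b E. apply (f_equal (fun y : {x : Ndom A | S x} => proj1_sig (projT2 (proj1_sig y)))) in E.
        simpl in E. destruct (Hidx a) as [ka Ea], (Hidx b) as [kb Eb].
        simpl in E. subst. congruence.
      * intros [x Sx]. destruct x as [i [k hk]]. unfold S in Sx. simpl in Sx. subst i.
        destruct (Hnth k hk) as [a Ea]. exists a.
        assert (Hp : phi a = existT _ i0 (exist _ k hk)).
        { unfold phi. generalize (Hlt a). destruct (Hidx a) as [k' Ek']. simpl. intro hl.
          assert (k' = k).
          { eapply NoDup_nth_error; [exact Hnd| |congruence].
            apply nth_error_Some. congruence. }
          subst k'. f_equal. f_equal. apply proof_irrelevance. }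
        apply eq_sig_hprop; [intros; apply proof_irrelevance|]. exact Hp.
      * intros x y. simpl. unfold Nlt, phi. simpl.
        destruct (dec (i0 = i0)) as [_|c]; [|congruence]. simpl.
        unfold f. destruct (Hidx x) as [kx Ex], (Hidx y) as [ky Ey]. simpl.
        rewrite Ex, Ey. reflexivity.
  - intros [S [[l Hl] [g [Ginj [Gsur Gval]]]]].
    assert (h : forall y : substructure A (NN A) S, {x : M | g x = y}).
    { intro y. apply constructive_indefinite_description. apply Gsur. }
    split; [|split].
    + exists (map (fun y => proj1_sig (h y)) (collect S l)).
      intro x. apply in_map_iff. exists (g x). split.
      * destruct (h (g x)) as [x' E]. simpl. apply Ginj. exact E.
      * destruct (g x) as [y Sy]. apply collect_in. apply Hl. exact Sy.
    + intro a. rewrite <- Gval. apply NN_refl.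
    + intros a b c. rewrite <- !Gval. apply NN_trans.
Qed.
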